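(* Let $\mathbb{C}$ and $\mathbb{I}$ be categories. Every parameterised monad on $\mathbb{C}$ indexed by $\mathbb{I}$ is a category-graded monad on $\mathbb{C}$ with a generalised unit; that is, there is an injective assignment sending each parameterised monad $(\mathsf{P}:\mathbb{I}^{\mathsf{op}}\times\mathbb{I}\to[\mathbb{C},\mathbb{C}],\mu^{\mathsf{P}},\eta^{\mathsf{P}})$ to a category-graded monad on $\mathbb{C}$ equipped with a generalised unit.
   Context: A parameterised monad on $\mathbb{C}$ indexed by $\mathbb{I}$ is a functor $\mathsf{P}:\mathbb{I}^{\mathsf{op}}\times\mathbb{I}\to[\mathbb{C},\mathbb{C}]$ with natural transformations $\eta^{\mathsf{P}}_I:\mathsf{Id}\to\mathsf{P}(I,I)$ and $\mu^{\mathsf{P}}_{I,J,K}:\mathsf{P}(I,J)\mathsf{P}(J,K)\to\mathsf{P}(I,K)$ satisfying the unit laws $\mu^{\mathsf{P}}_{I,I,J}\circ\eta^{\mathsf{P}}_I\mathsf{P}(I,J)=\mathrm{id}=\mu^{\mathsf{P}}_{I,J,J}\circ\mathsf{P}(I,J)\eta^{\mathsf{P}}_J$ and associativity $\mu^{\mathsf{P}}_{I,K,L}\circ\mu^{\mathsf{P}}_{I,J,K}\mathsf{P}(K,L)=\mu^{\mathsf{P}}_{I,J,L}\circ\mathsf{P}(I,J)\mu^{\mathsf{P}}_{J,K,L}$, with $\eta^{\mathsf{P}}$ dinatural in $I$ (i.e. $\mathsf{P}(I,f)\circ\eta^{\mathsf{P}}_I=\mathsf{P}(f,J)\circ\eta^{\mathsf{P}}_J$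 for $f:I\to J$) and $\mu^{\mathsf{P}}_{I,J,K}$ natural in $I,K$ and dinatural in $J$ (i.e. $\mu^{\mathsf{P}}_{I,J',K}\circ\mathsf{P}(I,g)\mathsf{P}(J',K)=\mu^{\mathsf{P}}_{I,J,K}\circ\mathsf{P}(I,J)\mathsf{P}(g,K)$ for $g:J\to J'$). A category-graded monad on $\mathbb{C}$ graded by a category $\mathbb{K}$ consists of endofunctors $\mathsf{T}_f$ for morphisms $f:I\to J$ of $\mathbb{K}$, natural transformations $\eta_I:\mathsf{Id}\to\mathsf{T}_{id_I}$ and $\mu_{f,g}:\mathsf{T}_f\mathsf{T}_g\to\mathsf{T}_{g\circ f}$ ($f:I\to J$, $g:J\to K$) with $\mu_{id_J,f}\circ\eta_J\mathsf{T}_f=\mathrm{id}_{\mathsf{T}_f}=\mu_{f,id_I}\circ\mathsf{T}_f\eta_I$ and $\mu_{g\circ f,h}\circ\mu_{f,g}\mathsf{T}_h=\mu_{f,h\circ g}\circ\mathsf{T}_f\mu_{g,h}$. A generalised unit for such a category-graded monad consists of a wide subcategory $\mathbb{S}\subseteq\mathbb{K}$ (same objects as $\mathbb{K}$) and natural transformations $\bar\eta_f:\mathsf{Id}\to\mathsf{T}_f$ for every morphism $f$ of $\mathbb{S}$, such that $\mu_{f,g}\circ\mathsf{T}_f\bar\eta_g\circ\bar\eta_f=\bar\eta_{g\circ f}$ for composable $f,g$ in $\mathbb{S}$ and $\bar\eta_{id_I}=\eta_I$ for every object $I$ (equivalently, a right lax natural transformation from the identity category-graded monad to $\mathsf{T}$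 restricted to $\mathbb{S}$, with identity component functors). *)

(* Defs.v *)
Record Category := {
  ob :> Type;
  hom : ob -> ob -> Type;
  idm : forall a, hom a a;
  comp : forall a b c, hom b c -> hom a b -> hom a c;
  comp_id_l : forall a b (f : hom a b), comp a b b (idm b) f = f;
  comp_id_r : forall a b (f : hom a b), comp a a b f (idm a) = f;
  comp_assoc : forall a b c d (f : hom a b) (g : hom b c) (h : hom c d),
      comp a c d h (comp a b c g f) = comp a b d (comp b c d h g) f
}.
Arguments hom {_} _ _.
Arguments idm {_} _.
Arguments comp {_ _ _ _} _ _.
Arguments comp_id_l {_ _ _} _.
Arguments comp_id_r {_ _ _} _.
Arguments comp_assoc {_ _ _ _ _} _ _ _.

Record Functor (C D : Category) := {
  fobj :> ob C -> ob D;
  fmap : forall a b : C, hom a b -> hom (fobj a) (fobj b);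
  fmap_id : forall a : C, fmap a a (idm a) = idm (fobj a);
  fmap_comp : forall (a b c : C) (f : hom a b) (g : hom b c),
      fmap a c (comp g f) = comp (fmap b c g) (fmap a b f)
}.
Arguments fobj {_ _} _ _.
Arguments fmap {_ _} _ {_ _} _.

Record NatTrans {C D : Category} (F G : Functor C D) := {
  component :> forall a : C, hom (F a) (G a);
  naturality : forall (a b : C) (f : hom a b),
      comp (fmap G f) (component a) = comp (component b) (fmap F f)
}.
Arguments component {_ _ _ _} _ _.

Definition Fid (C : Category) : Functor C C.
Proof.
  refine {| fobj := fun a => a; fmap := fun a b f => f |}; reflexivity.
Defined.

Definition Fcomp {C D E : Category} (F : Functor D E) (G : Functor C D) : Functor C E.
Proof.
  refine {| fobj := fun a => F (G a); fmap := fun a b f => fmap F (fmap G f) |}.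
  - intros a. rewrite fmap_id. apply fmap_id.
  - intros a b c f g. rewrite fmap_comp. apply fmap_comp.
Defined.

(** The functor P : I^op x I -> [C,C] is written out: its object part [PF],
    its action [Pmap f g = P(f,g)] on a morphism (f,g) : (A,B) -> (A',B') of
    I^op x I (i.e. f : A' -> A and g : B -> B' in I), and functoriality
    (equalities of natural transformations stated componentwise). *)
Record ParamMonad (C I : Category) := {
  PF : ob I -> ob I -> Functor C C;
  Pmap : forall (A A' B B' : I), hom A' A -> hom B B' -> NatTrans (PF A B) (PF A' B');
  Pmap_id : forall (A B : I) (X : C), Pmap A A B B (idm A) (idm B) X = idm (PF A B X);
  Pmap_comp : forall (A A' A'' B B' B'' : I) (f : hom A' A) (f' : hom A'' A')
                     (g : hom B B') (g' : hom B' B'') (X : C),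
      Pmap A A'' B B'' (comp f f') (comp g' g) X
      = comp (Pmap A' A'' B' B'' f' g' X) (Pmap A A' B B' f g X);
  peta : forall A : I, NatTrans (Fid C) (PF A A);
  pmu : forall A B K : I, NatTrans (Fcomp (PF A B) (PF B K)) (PF A K);
  pmu_unit_l : forall (A B : I) (X : C),
      comp (pmu A A B X) (peta A (PF A B X)) = idm (PF A B X);
  pmu_unit_r : forall (A B : I) (X : C),
      comp (pmu A B B X) (fmap (PF A B) (peta B X)) = idm (PF A B X);
  pmu_assoc : forall (A B K L : I) (X : C),
      comp (pmu A K L X) (pmu A B K (PF K L X))
      = comp (pmu A B L X) (fmap (PF A B) (pmu B K L X));
  peta_dinat : forall (A B : I) (f : hom A B) (X : C),
      comp (Pmap A A A B (idm A) f X) (peta A X)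
      = comp (Pmap B A B B f (idm B) X) (peta B X);
  pmu_nat_l : forall (A A' B K : I) (f : hom A' A) (X : C),
      comp (Pmap A A' K K f (idm K) X) (pmu A B K X)
      = comp (pmu A' B K X) (Pmap A A' B B f (idm B) (PF B K X));
  pmu_nat_r : forall (A B K K' : I) (h : hom K K') (X : C),
      comp (Pmap A A K K' (idm A) h X) (pmu A B K X)
      = comp (pmu A B K' X) (fmap (PF A B) (Pmap B B K K' (idm B) h X));
  pmu_dinat : forall (A J J' K : I) (g : hom J J') (X : C),
      comp (pmu A J' K X) (Pmap A A J J' (idm A) g (PF J' K X))
      = comp (pmu A J K X) (fmap (PF A J) (Pmap J' J K K g (idm K) X))
}.

(** Transport of a morphism T_h X -> T_h' X along an equality h = h' of grades
    (needed because the laws of a category-graded monad hold only up to the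
    propositional category laws of the grading category). *)
Definition tcast {C K : Category} (T : forall a b : K, hom a b -> Functor C C)
  {a b : K} {h h' : hom a b} (e : h = h') (X : C) : hom (T a b h X) (T a b h' X) :=
  match e in _ = h'' return hom (T a b h X) (T a b h'' X) with
  | eq_refl => idm _
  end.

Record GradedMonad (C K : Category) := {
  T : forall a b : K, hom a b -> Functor C C;
  geta : forall a : K, NatTrans (Fid C) (T a a (idm a));
  gmu : forall (a b c : K) (f : hom a b) (g : hom b c),
      NatTrans (Fcomp (T a b f) (T b c g)) (T a c (comp g f));
  gunit_l : forall (a b : K) (f : hom a b) (X : C),
      comp (gmu a a b (idm a) f X) (geta a (T a b f X))
      = tcast T (eq_sym (comp_id_r f)) X;
  gunit_r : forall (a b : K) (f : hom a b) (X : C),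
      comp (gmu a b b f (idm b) X) (fmap (T a b f) (geta b X))
      = tcast T (eq_sym (comp_id_l f)) X;
  gassoc : forall (a b c d : K) (f : hom a b) (g : hom b c) (h : hom c d) (X : C),
      comp (tcast T (comp_assoc f g h) X)
           (comp (gmu a c d (comp g f) h X) (gmu a b c f g (T c d h X)))
      = comp (gmu a b d f (comp h g) X) (fmap (T a b f) (gmu b c d g h X))
}.
Arguments T {_ _} _ {_ _} _.
Arguments geta {_ _} _ _.
Arguments gmu {_ _} _ {_ _ _} _ _.

Record WideSubcat (K : Category) := {
  inS : forall a b : K, hom a b -> Prop;
  inS_id : forall a : K, inS a a (idm a);
  inS_comp : forall (a b c : K) (f : hom a b) (g : hom b c),
      inS a b f -> inS b c g -> inS a c (comp g f)
}.
Arguments inS {_} _ {_ _} _.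
Arguments inS_id {_} _ _.
Arguments inS_comp {_} _ {_ _ _ _ _} _ _.

Record GenUnit {C K : Category} (M : GradedMonad C K) (S : WideSubcat K) := {
  ebar : forall (a b : K) (f : hom a b), inS S f -> NatTrans (Fid C) (T M f);
  ebar_comp : forall (a b c : K) (f : hom a b) (g : hom b c)
                     (hf : inS S f) (hg : inS S g) (X : C),
      comp (gmu M f g X) (comp (fmap (T M f) (ebar b c g hg X)) (ebar a b f hf X))
      = ebar a c (comp g f) (inS_comp S hf hg) X;
  ebar_id : forall (a : K) (X : C), ebar a a (idm a) (inS_id S a) X = geta M a X
}.

(* Main.v *)
Require Import Defs.
From Stdlib Require Import Setoid FunctionalExtensionality ProofIrrelevance Eqdep.

Section S.
Variables (C I : Category).

Definition ocomp (a b c : I) (g : option (hom b c)) (f : option (hom a b)) : option (hom a c) :=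
  match g, f with Some g', Some f' => Some (comp g' f') | _, _ => None end.

Definition OK : Category.
Proof.
  refine {| ob := ob I; hom := fun a b => option (hom a b);
            idm := fun a => Some (idm a); comp := ocomp |}.
  - intros a b [f|]; simpl; [rewrite comp_id_l|]; reflexivity.
  - intros a b [f|]; simpl; [rewrite comp_id_r|]; reflexivity.
  - intros a b c d [f|] [g|] [h|]; simpl; try reflexivity. rewrite comp_assoc; reflexivity.
Defined.

Lemma tcast_const (F : ob I -> ob I -> Functor C C) (a b : OK) (h h' : @hom OK a b)
  (e : h = h') (X : C) : @tcast C OK (fun a b _ => F a b) a b h h' e X = idm _.
Proof. destruct e; reflexivity. Qed.

Definition GM (P : ParamMonad C I) : GradedMonad C OK.
Proof.
  refine {| T := fun (a b : OK) (_ : @hom OK a b) => PF _ _ P a b;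
            geta := fun a => peta _ _ P a;
            gmu := fun a b c _ _ => pmu _ _ P a b c |}.
  - intros a b f X. rewrite tcast_const. apply pmu_unit_l.
  - intros a b f X. rewrite tcast_const. apply pmu_unit_r.
  - intros a b c d f g h X. rewrite tcast_const. rewrite comp_id_l. apply pmu_assoc.
Defined.

Definition Sw : WideSubcat OK.
Proof.
  refine {| inS := fun a b (h : @hom OK a b) => match h with Some _ => True | None => False end |}.
  - intros; exact Logic.I.
  - intros a b c [f|] [g|]; simpl; auto.
Defined.

Definition vcomp {F G H : Functor C C} (t : NatTrans G H) (s : NatTrans F G) : NatTrans F H.
Proof.
  refine {| component := fun X => comp (t X) (s X) |}.
  intros a b f. rewrite comp_assoc, naturality, <- comp_assoc, naturality, comp_assoc.
  reflexivity.
Defined.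

Definition eb (P : ParamMonad C I) (a b : I) (f : hom a b) : NatTrans (Fid C) (PF _ _ P a b) :=
  vcomp (Pmap _ _ P a a a b (idm a) f) (peta _ _ P a).


Lemma nat_id (F : Functor C C) (s : NatTrans (Fid C) F) (X Y : C) (h : hom X Y) :
  @comp C X Y (F Y) (component s Y) h = @comp C X (F X) (F Y) (fmap F h) (component s X).
Proof. symmetry. exact (naturality _ _ s X Y h). Qed.

Ltac nrm := cbn [eb vcomp component Fid Fcomp fobj fmap].
Ltac nrw H := let E := fresh in pose proof H as E; nrm; cbn [Fid Fcomp fobj fmap] in E; rewrite E; clear E.
Ltac nrwr H := let E := fresh in pose proof H as E; nrm; cbn [Fid Fcomp fobj fmap] in E; rewrite <- E; clear E.

Lemma eb_comp (P : ParamMonad C I) (a b c : I) (f : hom a b) (g : hom b c) (X : C) :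
  comp (pmu _ _ P a b c X) (comp (fmap (PF _ _ P a b) (eb P b c g X)) (eb P a b f X))
  = eb P a c (comp g f) X.
Proof.
  rewrite (naturality _ _ (eb P a b f)). nrm.
  rewrite comp_assoc, (comp_assoc _ _ (pmu _ _ P a b c X)).
  nrw (pmu_dinat _ _ P).
  rewrite <- (comp_assoc (peta _ _ P a (PF _ _ P b c X))).
  nrwr (nat_id _ (peta _ _ P a)).
  rewrite (comp_assoc (Pmap _ _ P b a c c f (idm c) X)). nrw (pmu_unit_l _ _ P). rewrite comp_id_l.
  rewrite comp_assoc. nrwr (Pmap_comp _ _ P). rewrite !comp_id_l.
  replace (Pmap _ _ P b a b c f g) with (Pmap _ _ P b a b c (comp f (idm a)) (comp g (idm b))) by (rewrite !comp_id_r; reflexivity).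
  nrw (Pmap_comp _ _ P). rewrite <- comp_assoc.
  nrwr (peta_dinat _ _ P). rewrite comp_assoc. nrwr (Pmap_comp _ _ P).
  rewrite !comp_id_l. reflexivity.
Qed.

Lemma Pmap_recon (P : ParamMonad C I) (A A' B B' : I) (f : hom A' A) (g : hom B B') (X : C) :
  Pmap _ _ P A A' B B' f g X =
  comp (comp (pmu _ _ P A' B B' X) (fmap (PF _ _ P A' B) (eb P B B' g X)))
       (comp (pmu _ _ P A' A B X) (eb P A' A f (PF _ _ P A B X))).
Proof.
  replace (Pmap _ _ P A A' B B' f g) with (Pmap _ _ P A A' B B' (comp f (idm A')) (comp g (idm B))) by (rewrite !comp_id_r; reflexivity).
  nrw (Pmap_comp _ _ P). f_equal.
  - nrw (peta_dinat _ _ P). rewrite fmap_comp. rewrite comp_assoc. nrwr (pmu_dinat _ _ P).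
    rewrite <- comp_assoc. nrwr (naturality _ _ (Pmap _ _ P A' A' B B' (idm A') g)).
    rewrite comp_assoc. nrw (pmu_unit_r _ _ P). rewrite comp_id_l. reflexivity.
  - rewrite comp_assoc. nrw (pmu_dinat _ _ P). rewrite <- comp_assoc.
    nrwr (nat_id _ (peta _ _ P A')).
    rewrite comp_assoc. nrw (pmu_unit_l _ _ P). rewrite comp_id_l. reflexivity.
Qed.

Definition ebarP (P : ParamMonad C I) (a b : OK) (h : @hom OK a b) :
  inS Sw h -> NatTrans (Fid C) (PF _ _ P a b) :=
  match h as h0 return (inS Sw h0 -> NatTrans (Fid C) (PF _ _ P a b)) with
  | Some f => fun _ => eb P a b f
  | None => fun H => False_rect _ H
  end.

Definition GU (P : ParamMonad C I) : GenUnit (GM P) Sw.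
Proof.
  refine (@Build_GenUnit C OK (GM P) Sw (ebarP P) _ _).
  - intros a b c [f|] [g|] hf hg X; try destruct hf; try destruct hg.
    exact (eb_comp P a b c f g X).
  - intros a X. cbn. nrw (Pmap_id _ _ P). apply comp_id_l.
Defined.

End S.

Lemma nt_ext {C D : Category} {F G : Functor C D} (s t : NatTrans F G) :
  (forall a, component s a = component t a) -> s = t.
Proof.
  destruct s as [s ns], t as [t nt]; simpl; intros H.
  assert (s = t) by (apply functional_extensionality_dep; exact H). subst t.
  f_equal. apply proof_irrelevance.
Qed.

Lemma gm_eq {C K : Category} (T0: forall a b : K, hom a b -> Functor C C) e1 m1 p1 q1 r1 e2 m2 p2 q2 r2 :
  Build_GradedMonad C K T0 e1 m1 p1 q1 r1 = Build_GradedMonad C K T0 e2 m2 p2 q2 r2 -> e1 = e2 /\ m1 = m2.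
Proof. intro H. injection H. intros H1 H2. apply inj_pair2 in H1, H2. auto. Qed.

Theorem proposition36 (C I : Category) :
  exists (K : Category) (S : WideSubcat K)
         (F : ParamMonad C I -> { M : GradedMonad C K & GenUnit M S }),
    forall P Q : ParamMonad C I, F P = F Q -> P = Q.
Proof.
  exists (OK I), (Sw I), (fun P => existT _ (GM C I P) (GU C I P)).
  intros P Q H.
  assert (HM := f_equal (@projT1 _ _) H). simpl in HM.
  assert (HF : PF _ _ P = PF _ _ Q).
  { pose proof (f_equal (fun M : GradedMonad C (OK I) => fun a b : I => @T _ _ M a b None) HM) as E.
    exact E. }
  pose proof (Pmap_recon C I P) as RP. pose proof (Pmap_recon C I Q) as RQ.
  destruct P as [PF1 Pm1 Pid1 Pc1 e1 m1 ul1 ur1 as1 ed1 nl1 nr1 md1].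
  destruct Q as [PF2 Pm2 Pid2 Pc2 e2 m2 ul2 ur2 as2 ed2 nl2 nr2 md2].
  simpl in HF. subst PF2.
  apply gm_eq in HM. destruct HM as [He Hm].
  assert (e1 = e2) by exact He. subst e2.
  assert (m1 = m2).
  { pose proof (f_equal (fun mm : forall (a b c : OK I) (f : @hom (OK I) a b) (g : @hom (OK I) b c),
        NatTrans (Fcomp (PF1 a b) (PF1 b c)) (PF1 a c) => fun a b c => mm a b c None None) Hm) as E.
    exact E. }
  subst m2.
  assert (ul1 = ul2) by apply proof_irrelevance. subst ul2.
  assert (ur1 = ur2) by apply proof_irrelevance. subst ur2.
  assert (as1 = as2) by apply proof_irrelevance. subst as2.
  apply inj_pair2 in H.
  assert (HE : forall (a b : I) (f : hom a b) (X : C),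
    eb C I (Build_ParamMonad C I PF1 Pm1 Pid1 Pc1 e1 m1 ul1 ur1 as1 ed1 nl1 nr1 md1) a b f X
    = eb C I (Build_ParamMonad C I PF1 Pm2 Pid2 Pc2 e1 m1 ul1 ur1 as1 ed2 nl2 nr2 md2) a b f X).
  { intros a b f X.
    exact (f_equal (fun G => component (@ebar C (OK I) _ (Sw I) G a b (Some f) Logic.I) X) H). }
  assert (Pm1 = Pm2).
  { do 6 (apply functional_extensionality_dep; intro).
    apply nt_ext. intro X.
    etransitivity. apply RP. etransitivity. 2: symmetry; apply RQ.
    rewrite !HE. reflexivity. }
  subst Pm2.
  f_equal; apply proof_irrelevance.
Qed.
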